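(* Let $q=27/25$ and $\Delta=6$. The function $t\mapsto \big(g_2(e^t)\big)^q$ is concave on the interval $\big[\ln(3/4),\ \ln\big(1-\frac{1}{(2^{\Delta-1}+1)^2}\big)\big]$.
   Context: $h(t)=(1-t)\left[\psi-\left(\frac{t}{1-t}\right)^{\chi}\right]$ with $\psi=13/10$, $\chi=1/2$, and $g_2(y)=\frac{1-y}{y}\,h\big((1-y)^{1/2}\big)$. *)

(* Defs.v *)
From Stdlib Require Import Reals.
Open Scope R_scope.

Definition psi : R := 13 / 10.
Definition chi : R := 1 / 2.

Definition h (t : R) : R := (1 - t) * (psi - Rpower (t / (1 - t)) chi).

Definition g2 (y : R) : R := (1 - y) / y * h (Rpower (1 - y) (1 / 2)).

Definition q : R := 27 / 25.
Definition Delta_deg : nat := 6.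

Definition concave_on (f : R -> R) (a b : R) : Prop :=
  forall x y lam, a <= x <= b -> a <= y <= b -> 0 <= lam <= 1 ->
    lam * f x + (1 - lam) * f y <= f (lam * x + (1 - lam) * y).

(* Main.v *)
Require Import Defs.
From Stdlib Require Import Reals Lra Psatz.
From Coquelicot Require Import Coquelicot.
Open Scope R_scope.

Definition Mf u := (1+2*u^2)*(1+u^2).
Definition Af u := (4*psi-5*u)*Mf u - u*(psi-u)*(6*u+8*u^3).
Definition Gf u := u^4*(psi-u)/Mf u.
Definition Kf u := - Af u / (4*Mf u).
Definition Df u := q*exp((q-1)*ln(Gf u))*Kf u.
Definition Qf (u:R) := 1352/625 - 533/50*u - 4244/625*u^2 - 1716/125*u^3 - 18758/625*u^4
  + 4901/250*u^5 - 637/25*u^6 + 3588/125*u^7 + 72/25*u^8 - 26/5*u^9 + 108/25*u^10.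
Definition Dp u := q*exp((q-1)*ln(Gf u))/Gf u * (-(u^3*Qf u)/(4*(Mf u)^3)).
Definition uf t := sqrt (sqrt (1 - exp t) / (1 - sqrt (1 - exp t))).
Definition up u := -(1+2*u^2)*(1+u^2)/(4*u*u^2).
Definition Phi u := exp (q * ln (Gf u)).
Definition PhiD u := q*exp(q*ln(Gf u))*(u^3*Af u/(Mf u)^2)/Gf u.
Definition F2 t := Phi (uf t).

Lemma Qneg u : 7/40 <= u <= 1 -> Qf u <= 0.
Proof. intros [h1 h2].
 pose (v := u - 7/40). assert (Hu : u = v + 7/40) by (unfold v; ring). clearbody v. subst u.
 assert (hv : 0 <= v <= 33/40) by lra.
 replace (Qf (v + 7/40)) with (-612521197359777/65536000000000000 + v*(-2436072596780181/163840000000000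
   + v*(-153352439494077/8192000000000 + v*(-780943346147/25600000000 + v*(-48825177277/2560000000
   + v*(1878206957/160000000 + v*(17059007/1600000 + v*(297813/10000 + v*(1287/2000 + v*(59/25 + v*(108/25)))))))))))
   by (unfold Qf; field).
 destruct hv as [h1' h2'].
 set (T := 1878206957/160000000 + v*(17059007/1600000 + v*(297813/10000 + v*(1287/2000 + v*(59/25 + v*(108/25)))))).
 assert (T5 : 0 <= v*(59/25 + v*(108/25)) <= 7) by nra.
 assert (T4 : 0 <= v*(1287/2000 + v*(59/25 + v*(108/25))) <= 8) by nra.
 assert (T3 : 0 <= v*(297813/10000 + v*(1287/2000 + v*(59/25 + v*(108/25)))) <= 38) by nra.
 assert (T2 : 0 <= v*(17059007/1600000 + v*(297813/10000 + v*(1287/2000 + v*(59/25 + v*(108/25))))) <= 49) by nra.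
 assert (TT : T <= 61) by (unfold T; lra).
 assert (TT0 : 0 <= T) by (unfold T; lra).
 clearbody T.
 set (X4 := -48825177277/2560000000 + v*T).
 assert (H4 : X4 <= 32) by (unfold X4; nra). clearbody X4.
 set (X3 := -780943346147/25600000000 + v*X4).
 assert (H3 : X3 <= 0) by (unfold X3; nra). clearbody X3.
 set (X2 := -153352439494077/8192000000000 + v*X3).
 assert (H2 : X2 <= 0) by (unfold X2; nra). clearbody X2.
 set (X1 := -2436072596780181/163840000000000 + v*X2).
 assert (H1 : X1 <= 0) by (unfold X1; nra). clearbody X1.
 nra.
Qed.

Lemma Mpos u : 0 < Mf u.
Proof. unfold Mf. nra. Qed.

Lemma Gpos u : 0 < u < psi -> 0 < Gf u.
Proof. intros [h1 h2]. unfold Gf. apply Rdiv_lt_0_compat; [|apply Mpos].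
 apply Rmult_lt_0_compat; [apply pow_lt; lra| lra]. Qed.

Lemma Df_deriv u : 0 < u < psi -> is_derive Df u (Dp u).
Proof. intros hu. pose proof (Gpos u hu) as hG. pose proof (Mpos u) as hM.
 unfold Df, Dp. unfold Gf in *. unfold Kf, Af. unfold Mf in *. auto_derive.
 - repeat split; try lra. cbn [pow] in hG. exact hG.
 - destruct hu as [h1 h2]. cbn [pow].
   set (E := exp _). unfold Qf. cbn [pow]. unfold q. unfold psi in *. field.
   repeat split; nra.
Qed.

Lemma Phi_deriv u : 0 < u < psi -> is_derive Phi u (PhiD u).
Proof. intros hu. pose proof (Gpos u hu) as hG. pose proof (Mpos u) as hM.
 unfold Phi, PhiD. unfold Gf in *. unfold Af. unfold Mf in *. auto_derive.
 - repeat split; try lra. cbn [pow] in hG. exact hG.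
 - destruct hu as [h1 h2]. cbn [pow].
   set (E := exp _). unfold q. unfold psi in *. field.
   repeat split; nra.
Qed.

Lemma uf_facts t : t < 0 ->
  let s := sqrt (1 - exp t) in
  0 < exp t < 1 /\ 0 < s < 1 /\ s * s = 1 - exp t /\ 0 < uf t /\ uf t * uf t = s / (1 - s).
Proof. intros ht s.
 assert (hy : 0 < exp t < 1) by (split; [apply exp_pos| rewrite <- exp_0; apply exp_increasing; lra]).
 assert (hs2 : s * s = 1 - exp t) by (unfold s; apply sqrt_sqrt; lra).
 assert (hs0 : 0 < s) by (unfold s; apply sqrt_lt_R0; lra).
 assert (hs1 : s < 1) by nra.
 assert (hw : 0 < s / (1 - s)) by (apply Rdiv_lt_0_compat; lra).
 repeat split; try lra.
 - unfold uf; fold s. apply sqrt_lt_R0; lra.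
 - unfold uf; fold s. apply sqrt_sqrt; lra.
Qed.

Lemma uf_deriv t : t < 0 -> is_derive uf t (up (uf t)).
Proof. intros ht. destruct (uf_facts t ht) as (hy & hs & hs2 & hu & hu2).
 unfold uf in *. auto_derive.
 - replace (1 + - exp t) with (1 - exp t) by ring.
   set (s := sqrt (1 - exp t)) in *.
   repeat split; try lra. apply Rmult_lt_0_compat; [lra | apply Rinv_0_lt_compat; lra].
 - replace (1 + - exp t) with (1 - exp t) by ring.
   set (s := sqrt (1 - exp t)) in *.
   replace (1 + - s) with (1 - s) by ring.
   fold (s / (1 - s)). set (u := sqrt (s / (1 - s))) in *.
   assert (E : exp t = 1 - s*s) by lra. rewrite E.
   clearbody u s. 
   unfold up. replace (u^2) with (s/(1-s)) by (rewrite <- hu2; ring).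
   field. repeat split; lra.
Qed.

Lemma F2_deriv t : t < 0 -> uf t < psi -> is_derive F2 t (Df (uf t)).
Proof. intros ht hp. destruct (uf_facts t ht) as (hy & hs & hs2 & hu & hu2).
 assert (hu' : 0 < uf t < psi) by lra.
 pose proof (is_derive_comp Phi uf t _ _ (Phi_deriv _ hu') (uf_deriv t ht)) as H.
 unfold F2. eapply is_derive_ext. { intro; reflexivity. }
 replace (Df (uf t)) with (scal (up (uf t)) (PhiD (uf t))). exact H.
 change (scal (up (uf t)) (PhiD (uf t))) with (up (uf t) * PhiD (uf t)).
 set (u := uf t) in *. clearbody u.
 pose proof (Gpos u hu') as hG. pose proof (Mpos u) as hM.
 unfold PhiD, Df, Kf, up.
 replace (exp (q * ln (Gf u))) with (exp ((q-1) * ln (Gf u)) * Gf u).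
 2:{ rewrite <- (exp_ln (Gf u)) at 2 by lra. rewrite <- exp_plus. f_equal. ring. }
 set (E := exp _). clearbody E. match goal with |- ?a = ?b => change (@eq R a b) end.
 clear H hs2 hu2 hs hy. unfold Mf in *.
 generalize dependent (Gf u). generalize (Af u). intros A G hG. field. repeat split; try lra; nra.
Qed.

Lemma exp_le' x y : x <= y -> exp x <= exp y.
Proof. intros [h|h]. left; apply exp_increasing; auto. subst; lra. Qed.

Lemma g2_eq t : t < 0 -> g2 (exp t) = Gf (uf t).
Proof. intros ht. destruct (uf_facts t ht) as (hy & hs & hs2 & hu & hu2).
 unfold g2, h. replace (1/2) with (/2) by field. rewrite Rpower_sqrt by lra.
 unfold chi. replace (1/2) with (/2) by field. rewrite Rpower_sqrt.
 2:{ apply Rdiv_lt_0_compat; lra. }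
 fold (uf t). set (s := sqrt (1 - exp t)) in *. set (u := uf t) in *. clearbody s u.
 unfold Gf, Mf. replace (u^4) with ((s/(1-s))^2) by (rewrite <- hu2; ring).
 replace (u^2) with (s/(1-s)) by (rewrite <- hu2; ring).
 assert (E : exp t = 1 - s*s) by lra. rewrite E. field. repeat split; try lra; nra.
Qed.

Lemma interval_facts t : ln (3/4) <= t <= ln (1088/1089) ->
  t < 0 /\ 7/40 <= uf t <= 1.
Proof. intros [h1 h2].
 assert (ht : t < 0).
 { apply Rle_lt_trans with (1 := h2). rewrite <- ln_1. apply ln_increasing; lra. }
 split; [exact ht|].
 destruct (uf_facts t ht) as (hy & hs & hs2 & hu & hu2).
 assert (e1 : 3/4 <= exp t). { rewrite <- (exp_ln (3/4)) by lra. apply exp_le'; lra. }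
 assert (e2 : exp t <= 1088/1089). { rewrite <- (exp_ln (1088/1089)) by lra. apply exp_le'; lra. }
 set (s := sqrt (1 - exp t)) in *. set (u := uf t) in *. clearbody s u.
 assert (s1 : 1/33 <= s <= 1/2) by (split; nra).
 assert (w1 : 1/32 <= s/(1-s)). { apply Rmult_le_reg_r with (1-s). lra. field_simplify; lra. }
 assert (w2 : s/(1-s) <= 1). { apply Rmult_le_reg_r with (1-s). lra. field_simplify; lra. }
 split; nra.
Qed.

Lemma uf_mono t1 t2 : t1 <= t2 -> t2 < 0 -> uf t2 <= uf t1.
Proof. intros h12 h2. assert (h1 : t1 < 0) by lra.
 destruct (uf_facts t1 h1) as (hy1 & hs1 & hs21 & hu1 & hu21).
 destruct (uf_facts t2 h2) as (hy2 & hs2 & hs22 & hu2 & hu22).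
 assert (e : exp t1 <= exp t2) by (apply exp_le'; lra).
 set (s1 := sqrt (1 - exp t1)) in *. set (s2 := sqrt (1 - exp t2)) in *.
 set (u1 := uf t1) in *. set (u2 := uf t2) in *. clearbody s1 s2 u1 u2.
 assert (hs : s2 <= s1) by nra.
 assert (hw : s2/(1-s2) <= s1/(1-s1)).
 { apply Rmult_le_reg_r with ((1-s1)*(1-s2)). nra. field_simplify; nra. }
 nra.
Qed.

Lemma mvt (f df : R -> R) (a b : R) : a <= b -> (forall x, a <= x <= b -> is_derive f x (df x)) ->
  exists c, a <= c <= b /\ f b - f a = df c * (b - a).
Proof. intros hab hd.
 destruct (MVT_gen f a b df) as [c [hc e]].
 - intros x hx. rewrite Rmin_left in hx by lra. rewrite Rmax_right in hx by lra. apply hd; lra.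
 - intros x hx. rewrite Rmin_left in hx by lra. rewrite Rmax_right in hx by lra.
   apply continuity_pt_filterlim. apply (ex_derive_continuous (K:=R_AbsRing) (V:=R_NormedModule) f x). eexists. apply hd; lra.
 - rewrite Rmin_left in hc by lra. rewrite Rmax_right in hc by lra. exists c; split; auto.
Qed.

Lemma Df_mono u1 u2 : 7/40 <= u1 <= u2 -> u2 <= 1 -> Df u1 <= Df u2.
Proof. intros h1 h2.
 destruct (mvt Df Dp u1 u2) as [c [hc e]]; try lra.
 { intros x hx. apply Df_deriv. unfold psi; lra. }
 assert (0 <= Dp c).
 { assert (hcp : 0 < c < psi) by (unfold psi; lra).
   pose proof (Gpos c hcp). pose proof (Mpos c). pose proof (Qneg c ltac:(lra)).
   unfold Dp. apply Rmult_le_pos.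
   - apply Rmult_le_pos. apply Rmult_le_pos. unfold q; lra. left; apply exp_pos.
     left; apply Rinv_0_lt_compat; lra.
   - unfold Rdiv. rewrite Ropp_mult_distr_l. apply Rmult_le_pos.
     + assert (0 < c^3) by (apply pow_lt; lra). nra.
     + left. apply Rinv_0_lt_compat. assert (0 < Mf c ^3) by (apply pow_lt; lra). lra. }
 nra.
Qed.

Lemma concave_deriv (f df : R -> R) (a b : R) : (forall t, a <= t <= b -> is_derive f t (df t)) ->
  (forall x y, a <= x <= y -> y <= b -> df y <= df x) -> concave_on f a b.
Proof. intros hd hm.
 assert (key : forall x y lam, a <= x <= y -> y <= b -> 0 <= lam <= 1 ->
    lam * f x + (1 - lam) * f y <= f (lam * x + (1 - lam) * y)).
 { intros x y lam hx hy hl. set (z := lam * x + (1 - lam) * y).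
   assert (hz : x <= z <= y) by (unfold z; nra).
   destruct (mvt f df x z) as [c1 [hc1 e1]]; [lra| intros; apply hd; lra |].
   destruct (mvt f df z y) as [c2 [hc2 e2]]; [lra| intros; apply hd; lra |].
   assert (hd12 : df c2 <= df c1) by (apply hm; lra).
   assert (zx : z - x = (1 - lam) * (y - x)) by (unfold z; ring).
   assert (yz : y - z = lam * (y - x)) by (unfold z; ring).
   rewrite zx in e1. rewrite yz in e2.
   assert (0 <= lam * (1 - lam) * (y - x)) by (apply Rmult_le_pos; nra).
   nra. }
 intros x y lam hx hy hl. destruct (Rle_dec x y).
 - apply key; lra.
 - replace (lam * f x + (1 - lam) * f y) with ((1 - lam) * f y + (1 - (1 - lam)) * f x) by ring.
   replace (lam * x + (1 - lam) * y) with ((1 - lam) * y + (1 - (1 - lam)) * x) by ring.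
   apply key; lra.
Qed.

Theorem lemma47 :
  concave_on (fun t => Rpower (g2 (exp t)) q)
    (ln (3 / 4))
    (ln (1 - 1 / (2 ^ (Delta_deg - 1) + 1) ^ 2)).
Proof.
 replace (1 - 1 / (2 ^ (Delta_deg - 1) + 1) ^ 2) with (1088/1089)
   by (unfold Delta_deg; simpl; field).
 assert (C : concave_on F2 (ln (3/4)) (ln (1088/1089))).
 { apply concave_deriv with (df := fun t => Df (uf t)).
   - intros t ht. destruct (interval_facts t ht) as [h0 hu].
     apply F2_deriv; auto. unfold psi; lra.
   - intros x y hx hy. destruct (interval_facts x ltac:(lra)) as [h0 hu].
     destruct (interval_facts y ltac:(lra)) as [h0' hu'].
     apply Df_mono; try lra. split; [lra|]. apply uf_mono; lra. }
 intros x y lam hx hy hl.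
 assert (hz : ln (3/4) <= lam * x + (1 - lam) * y <= ln (1088/1089)) by nra.
 assert (E : forall t, ln (3/4) <= t <= ln (1088/1089) -> Rpower (g2 (exp t)) q = F2 t).
 { intros t ht. destruct (interval_facts t ht) as [h0 hu].
   rewrite g2_eq by auto. unfold Rpower, F2, Phi. reflexivity. }
 rewrite !E by auto. apply C; auto.
Qed.
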